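(* Let $G=\mathbb{Z}\oplus\mathbb{Z}$, written as integer column vectors, and for $(i,j)\neq(0,0)$ let $[i/j]$ denote the unique maximal cyclic subgroup of $G$ containing $\binom{i}{j}$. Let $\nu,\mu$ be integers with $\gcd(\nu,\mu)=1$, $\mu>0$ and $0\le\nu<\mu$. Then the only automorphisms of $G$ that preserve each of $[\nu/\mu]$ and $[1/0]$ are among $$\phi_1=\pm\begin{pmatrix}1&0\\0&1\end{pmatrix},\quad \phi_2=\pm\begin{pmatrix}-1&1\\0&1\end{pmatrix},\quad \phi_3=\pm\begin{pmatrix}-1&0\\0&1\end{pmatrix}.$$ Only $\phi_1$ works for all $[\nu/\mu]$, $\phi_2$ works only for $[1/2]$, and $\phi_3$ works only for $[0/1]$.
   Context: Automorphisms of $\mathbb{Z}\oplus\mathbb{Z}$ are identified with $2\times 2$ integer matrices of determinant $\pm1$ acting on column vectors on the left. An automorphism preserves a subgroup if it maps it onto itself. *)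

(* Defs.v *)
(* G = Z (+) Z as integer column vectors 'cV[int]_2,
   automorphisms as 2x2 integer matrices of determinant +-1 acting on the left. *)
From mathcomp Require Import all_boot all_order all_algebra.
Set Implicit Arguments. Unset Strict Implicit. Unset Printing Implicit Defensive.
Import Order.TTheory GRing.Theory Num.Theory.
Local Open Scope ring_scope.

Definition vec2 (a b : int) : 'cV[int]_2 :=
  \col_(i < 2) (if (i : nat) == 0%N then a else b).

Definition mx2 (a b c d : int) : 'M[int]_2 :=
  \matrix_(i < 2, j < 2)
    (if (i : nat) == 0%N then (if (j : nat) == 0%N then a else b)
     else (if (j : nat) == 0%N then c else d)).

Definition subgrp := 'cV[int]_2 -> Prop.

Definition cyc (u : 'cV[int]_2) : subgrp := fun w => exists k : int, w = k *: u.

Definition is_cyclic (H : subgrp) : Prop :=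
  exists u, forall w, H w <-> cyc u w.

(* H is a maximal cyclic subgroup of G containing v; for v <> 0 such an H
   exists and is unique, and is denoted [i/j] for v = (i; j) in the paper *)
Definition max_cyclic_containing (v : 'cV[int]_2) (H : subgrp) : Prop :=
  [/\ is_cyclic H, H v &
      forall K : subgrp, is_cyclic K -> (forall w, H w -> K w) ->
        forall w, K w -> H w].

Definition is_aut (A : 'M[int]_2) : Prop := \det A = 1 \/ \det A = -1.

Definition preserves (A : 'M[int]_2) (H : subgrp) : Prop :=
  (forall w, H w -> H (A *m w)) /\
  (forall w, H w -> exists w', H w' /\ A *m w' = w).

Definition phi1 : 'M[int]_2 := mx2 1 0 0 1.
Definition phi2 : 'M[int]_2 := mx2 (-1) 1 0 1.
Definition phi3 : 'M[int]_2 := mx2 (-1) 0 0 1.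

(* Main.v *)
Require Import Defs.
From mathcomp Require Import all_boot all_order all_algebra.
From mathcomp Require Import zify ring lra.
Import Order.TTheory GRing.Theory Num.Theory.
Local Open Scope ring_scope.

Lemma vec2_eq a b c d : vec2 a b = vec2 c d -> a = c /\ b = d.
Proof.
move=> E; split.
- by have := congr1 (fun v : 'cV[int]_2 => v ord0 ord0) E; rewrite !mxE.
- by have := congr1 (fun v : 'cV[int]_2 => v (@Ordinal 2 1 isT) ord0) E; rewrite !mxE.
Qed.

Arguments vec2_eq {a b c d}.

Lemma scale_vec2 k a b : k *: vec2 a b = vec2 (k * a) (k * b).
Proof. by apply/matrixP=> i j; rewrite !mxE; case: ifP. Qed.

Lemma scale_mx2 k a b c d : k *: mx2 a b c d = mx2 (k*a) (k*b) (k*c) (k*d).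
Proof. by apply/matrixP=> i j; rewrite !mxE; do 2 case: ifP. Qed.

Lemma mul_mx2 a b c d x y : mx2 a b c d *m vec2 x y = vec2 (a*x+b*y) (c*x+d*y).
Proof.
apply/matrixP=> i j; rewrite !mxE big_ord_recr big_ord1 /= !mxE /=.
by case: ifP.
Qed.

Lemma mx2_eta (A : 'M[int]_2) :
  A = mx2 (A ord0 ord0) (A ord0 (@Ordinal 2 1 isT)) (A (@Ordinal 2 1 isT) ord0)
          (A (@Ordinal 2 1 isT) (@Ordinal 2 1 isT)).
Proof.
apply/matrixP=> i j; rewrite !mxE.
case: i => [[|[|//]] ?]; case: j => [[|[|//]] ?] /=; congr (A _ _); exact: val_inj.
Qed.

Lemma unit_int m k : m * k = 1 -> k = 1 \/ k = -1 :> int.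
Proof.
move=> h; have := congr1 absz h; rewrite abszM /= => /eqP; rewrite muln_eq1 => /andP[_ /eqP hk].
lia.
Qed.

Arguments unit_int {m k}.

Lemma vec2_eta (u : 'cV[int]_2) : u = vec2 (u ord0 ord0) (u (@Ordinal 2 1 isT) ord0).
Proof.
apply/matrixP=> i j; rewrite !mxE; rewrite (ord1 j).
case: i => [[|[|//]] ?] /=; congr (u _ _); exact: val_inj.
Qed.

Lemma H_cyc x y H : coprimez x y -> max_cyclic_containing (vec2 x y) H ->
  forall w, H w <-> cyc (vec2 x y) w.
Proof.
move=> /coprimezP [[p q] /= Hb] [[u Hu] /Hu [k Hk] _].
rewrite (vec2_eta u) scale_vec2 in Hk.
have [ex ey] := vec2_eq Hk.
have hk1 : (p * u ord0 ord0 + q * u (@Ordinal 2 1 isT) ord0) * k = 1.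
  by rewrite -Hb ex ey; ring.
have kk : k * k = 1 by case: (unit_int hk1) => ->.
have eu : u = k *: vec2 x y.
  by rewrite (vec2_eta u) ex ey scale_vec2 !mulrA kk !mul1r.
move=> w; rewrite Hu; split=> [[j ->]|[j ->]].
- by exists (j * k); rewrite eu scalerA.
- by exists (j * k); rewrite eu scalerA -mulrA kk mulr1.
Qed.

Lemma pres_equiv A (H H' : subgrp) : (forall w, H w <-> H' w) ->
  preserves A H -> preserves A H'.
Proof.
move=> E [h1 h2]; split=> w /E hw.
- by apply/E; apply: h1.
- by have [w' [/E hw' <-]] := h2 w hw; exists w'.
Qed.

Lemma cyc_pres A v e : (e = 1 \/ e = -1) -> A *m v = e *: v -> preserves A (cyc v).
Proof.
move=> he hA; have ee : e * e = 1 by case: he => ->.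
split=> w [j ->].
- by exists (j * e); rewrite -scalemxAr hA scalerA.
- exists (j * e *: v); split; first by exists (j * e).
  by rewrite -scalemxAr hA scalerA -mulrA ee mulr1.
Qed.

Lemma pres_cyc A x y : (x != 0 \/ y != 0) -> preserves A (cyc (vec2 x y)) ->
  exists e, (e = 1 \/ e = -1) /\ A *m vec2 x y = e *: vec2 x y.
Proof.
move=> nz [h1 h2].
have [k hk] := h1 (vec2 x y) (ex_intro _ 1 (esym (scale1r _))).
have [w' [[m ->] hw]] := h2 (vec2 x y) (ex_intro _ 1 (esym (scale1r _))).
rewrite -scalemxAr hk scalerA scale_vec2 in hw.
have [ex ey] := vec2_eq hw.
have mk : m * k = 1.
  case: nz => /negPf nz.
  - have : (m * k - 1) * x == 0 by rewrite mulrBl mul1r ex subrr.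
    by rewrite mulf_eq0 nz orbF subr_eq0 => /eqP.
  - have : (m * k - 1) * y == 0 by rewrite mulrBl mul1r ey subrr.
    by rewrite mulf_eq0 nz orbF subr_eq0 => /eqP.
by exists k; split=> //; exact: unit_int mk.
Qed.

Arguments H_cyc {x y H}.
Arguments pres_equiv {A H H'}.
Arguments cyc_pres {A v e}.
Arguments pres_cyc {A x y}.

Lemma small_case nu mu b : coprimez nu mu -> 0 < mu -> 0 <= nu -> nu < mu ->
  b * mu = 2 * nu -> (b = 0 /\ nu = 0 /\ mu = 1) \/ (b = 1 /\ nu = 1 /\ mu = 2).
Proof.
move=> /coprimezP [[p q] /= Hb] h1 h2 h3 h4.
have : b = 0 \/ b = 1 by nia.
case=> eb; subst b.
- left; have en : nu = 0 by lia.
  subst nu; split=> //; split=> //.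
  have : q * mu = 1 by rewrite -[RHS]Hb; ring.
  move=> /unit_int; lia.
- right; have em : mu = 2 * nu by lia.
  subst mu; split=> //.
  have : (p + q * 2) * nu = 1.
    by rewrite -[RHS]Hb; ring.
  move=> /unit_int; lia.
Qed.

Arguments small_case {nu mu b}.

Theorem mainTheorem3 (nu mu : int) (H K : subgrp) :
  coprimez nu mu -> 0 < mu -> 0 <= nu -> nu < mu ->
  max_cyclic_containing (vec2 nu mu) H ->
  max_cyclic_containing (vec2 1 0) K ->
  (* every automorphism preserving [nu/mu] and [1/0] is one of the phi_i *)
  (forall A : 'M[int]_2, is_aut A -> preserves A H -> preserves A K ->
     exists s : int, (s = 1 \/ s = -1) /\
       (A = s *: phi1 \/ A = s *: phi2 \/ A = s *: phi3)) /\
  (forall s : int, s = 1 \/ s = -1 ->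
     (* phi_1 works for every [nu/mu] *)
     (preserves (s *: phi1) H /\ preserves (s *: phi1) K) /\
     (* phi_2 works exactly for [1/2] *)
     ((preserves (s *: phi2) H /\ preserves (s *: phi2) K) <->
        (nu = 1 /\ mu = 2)) /\
     (* phi_3 works exactly for [0/1] *)
     ((preserves (s *: phi3) H /\ preserves (s *: phi3) K) <->
        (nu = 0 /\ mu = 1))).
Proof.
move=> cop h1 h2 h3 hH hK.
have HH := H_cyc cop hH.
have cop10 : coprimez 1 0 by [].
have KK := H_cyc cop10 hK.
have HH' : forall w, cyc (vec2 nu mu) w <-> H w by move=> w; apply: iff_sym.
have KK' : forall w, cyc (vec2 1 0) w <-> K w by move=> w; apply: iff_sym.
have mu0 : mu != 0 by lia.
split.
  move=> A _ pH pK.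
  have [e [he hAv]] := pres_cyc (or_intror mu0) (pres_equiv HH pH).
  have [f [hf hAe]] := pres_cyc (or_introl (oner_neq0 _)) (pres_equiv KK pK).
  rewrite (mx2_eta A) in hAv hAe *.
  move: hAv hAe; set a := A _ _; set b := A _ _; set c := A _ _; set d := A _ _.
  clearbody a b c d.
  rewrite !mul_mx2 !scale_vec2 => /vec2_eq [ev1 ev2] /vec2_eq [ee1 ee2].
  have ea : a = f by lia.
  have ec : c = 0 by lia.
  subst a c.
  have ed : d = e by nia.
  subst d.
  case: he => ?; subst e; case: hf => ?; subst f.
  - have -> : b = 0 by nia.
    by exists 1; split; [by left|]; left; rewrite /phi1 /phi2 /phi3 !scale_mx2; congr mx2; ring.
  - have [[eb _]|[eb _]] := small_case (b := b) cop h1 h2 h3 ltac:(lia); subst b.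
    + by exists 1; split; [by left|]; right; right; rewrite /phi1 /phi2 /phi3 !scale_mx2; congr mx2; ring.
    + by exists 1; split; [by left|]; right; left; rewrite /phi1 /phi2 /phi3 !scale_mx2; congr mx2; ring.
  - have [[eb _]|[eb _]] := small_case (b := - b) cop h1 h2 h3 ltac:(lia).
    + have -> : b = 0 by lia.
      by exists (-1); split; [by right|]; right; right; rewrite /phi1 /phi2 /phi3 !scale_mx2; congr mx2; ring.
    + have -> : b = -1 by lia.
      by exists (-1); split; [by right|]; right; left; rewrite /phi1 /phi2 /phi3 !scale_mx2; congr mx2; ring.
  - have -> : b = 0 by nia.
    by exists (-1); split; [by right|]; left; rewrite /phi1 /phi2 /phi3 !scale_mx2; congr mx2; ring.
move=> s hs; split; [|split].
- split.
  + apply: (pres_equiv HH'); apply: (cyc_pres hs).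
    by rewrite /phi1 scale_mx2 mul_mx2 scale_vec2; congr vec2; ring.
  + apply: (pres_equiv KK'); apply: (cyc_pres hs).
    by rewrite /phi1 scale_mx2 mul_mx2 scale_vec2; congr vec2; ring.
- split.
  + case=> pH _.
    have [e [he hAv]] := pres_cyc (or_intror mu0) (pres_equiv HH pH).
    move: hAv; rewrite /phi2 scale_mx2 mul_mx2 scale_vec2 => /vec2_eq [ev1 ev2].
    have em : 1 * mu = 2 * nu by case: hs he => ? [] ?; subst s e; lia.
    have sc := small_case cop h1 h2 h3 em.
    by case: sc => [[x1 [x2 x3]]|[x1 [x2 x3]]]; [lia|split].
  + case=> En Em; rewrite En Em in HH'; split.
    * apply: (pres_equiv HH'); apply: (cyc_pres hs).
      by rewrite /phi2 scale_mx2 mul_mx2 scale_vec2; congr vec2; ring.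
    * apply: (pres_equiv KK'); apply: (cyc_pres (e := - s)); first by case: hs => ->; [right|left].
      by rewrite /phi2 scale_mx2 mul_mx2 scale_vec2; congr vec2; ring.
- split.
  + case=> pH _.
    have [e [he hAv]] := pres_cyc (or_intror mu0) (pres_equiv HH pH).
    move: hAv; rewrite /phi3 scale_mx2 mul_mx2 scale_vec2 => /vec2_eq [ev1 ev2].
    have em : 0 * mu = 2 * nu by case: hs he => ? [] ?; subst s e; lia.
    have sc := small_case cop h1 h2 h3 em.
    by case: sc => [[x1 [x2 x3]]|[x1 [x2 x3]]]; [split|lia].
  + case=> En Em; rewrite En Em in HH'; split.
    * apply: (pres_equiv HH'); apply: (cyc_pres hs).
      by rewrite /phi3 scale_mx2 mul_mx2 scale_vec2; congr vec2; ring.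
    * apply: (pres_equiv KK'); apply: (cyc_pres (e := - s)); first by case: hs => ->; [right|left].
      by rewrite /phi3 scale_mx2 mul_mx2 scale_vec2; congr vec2; ring.
Qed.
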